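(* Let $k\ge3$ be odd and let $G$ be a $k$-uniform hypergraph. Then the number of minimal canonical H-eigenvectors of the Laplacian tensor $\mathcal D-\mathcal A$ corresponding to the eigenvalue $0$, counted with $\mathbf x$ and $-\mathbf x$ identified, equals the number of connected components of $G$ (singletons included).
   Context: A $k$-uniform hypergraph $G=(V,E)$ has vertex set $V=[n]$ ($n\ge k$) and nonempty edge set $E$ of $k$-element subsets; $E_i=\{e\in E:i\in e\}$, $d_i=|E_i|$. Connected components are maximal sets of vertices pairwise joined by chains of edges with consecutive edges intersecting; an isolated vertex (singleton) is also a connected component. $\mathcal A$: $a_{i_1\dots i_k}=\frac1{(k-1)!}$ if $\{i_1,\dots,i_k\}\in E$, else $0$; $\mathcal D$ diagonal with $d_{i\dots i}=d_i$; so $((\mathcal D-\mathcal A)\mathbf x^{k-1})_i=d_ix_i^{k-1}-\sum_{e\in E_i}\prod_{j\in e\setminus\{i\}}x_j$. A nonzero $\mathbf x\in\mathbb C^n$ is an eigenvector of $\mathcal T$ for $\lambda$ if $(\mathcal T\mathbf x^{k-1})_i=\lambda x_i^{k-1}$ for all $i$; an H-eigenvector is a real eigenvector; canonical means $\max_i|x_i|=1$; an eigenvector of eigenvalue $0$ is minimal if no eigenvector of eigenvalue $0$ has support strictly contained in its support. *)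

(* Defs.v *)
From HB Require Import structures.
From mathcomp Require Import all_boot all_order all_algebra.
Set Implicit Arguments. Unset Strict Implicit. Unset Printing Implicit Defensive.
Import Order.TTheory GRing.Theory Num.Theory.
Local Open Scope ring_scope.

(* A hypergraph on vertex set 'I_n is given by its edge set E : {set {set 'I_n}}. *)

Definition edges_at (n : nat) (E : {set {set 'I_n}}) (i : 'I_n) : {set {set 'I_n}} :=
  [set e in E | i \in e].
Definition degree (n : nat) (E : {set {set 'I_n}}) (i : 'I_n) : nat :=
  #|edges_at E i|.

(* ((D - A) x^{k-1})_i = d_i x_i^{k-1} - sum_{e in E_i} prod_{j in e \ i} x_j *)
Definition laplacian_apply (C : numClosedFieldType) (n k : nat)
    (E : {set {set 'I_n}}) (x : 'rV[C]_n) (i : 'I_n) : C :=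
  (degree E i)%:R * x ord0 i ^+ k.-1
  - \sum_(e in edges_at E i) \prod_(j in e :\ i) x ord0 j.

Definition is_eigvec (C : numClosedFieldType) (n k : nat)
    (E : {set {set 'I_n}}) (lambda : C) (x : 'rV[C]_n) : Prop :=
  x != 0 /\ forall i : 'I_n, laplacian_apply k E x i = lambda * x ord0 i ^+ k.-1.

(* H-eigenvector: real eigenvector *)
Definition is_real_vec (C : numClosedFieldType) (n : nat) (x : 'rV[C]_n) : Prop :=
  forall i : 'I_n, x ord0 i \is Num.real.

Definition is_canonical (C : numClosedFieldType) (n : nat) (x : 'rV[C]_n) : Prop :=
  (exists i : 'I_n, `|x ord0 i| = 1) /\ (forall i : 'I_n, `|x ord0 i| <= 1).

Definition support (C : numClosedFieldType) (n : nat) (x : 'rV[C]_n) : {set 'I_n} :=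
  [set i | x ord0 i != 0].

Definition is_minimal0 (C : numClosedFieldType) (n k : nat)
    (E : {set {set 'I_n}}) (x : 'rV[C]_n) : Prop :=
  is_eigvec k E 0 x /\
  forall y : 'rV[C]_n, is_eigvec k E 0 y -> ~ (support y \proper support x).

Definition minimal_canonical_H0 (C : numClosedFieldType) (n k : nat)
    (E : {set {set 'I_n}}) (x : 'rV[C]_n) : Prop :=
  is_minimal0 k E x /\ is_real_vec x /\ is_canonical x.

(* connected components: i ~ j if some edge contains both; take the
   reflexive-transitive closure; isolated vertices form singleton components *)
Definition adj (n : nat) (E : {set {set 'I_n}}) : rel 'I_n :=
  fun i j => [exists e in E, (i \in e) && (j \in e)].

Definition num_components (n : nat) (E : {set {set 'I_n}}) : nat :=
  #|[set [set j | connect (adj E) i j] | i : 'I_n]|.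

(* Main.v *)
Require Import Defs.
From HB Require Import structures.
From mathcomp Require Import all_boot all_order all_algebra zify.
Import Order.TTheory GRing.Theory Num.Theory.
Set Implicit Arguments. Unset Strict Implicit.
Local Open Scope ring_scope.

Section Aux.
Variables (C : numClosedFieldType) (n k : nat) (E : {set {set 'I_n}}).
Hypothesis Hk3 : (3 <= k)%N.
Hypothesis Hunif : forall e, e \in E -> #|e| = k.

Lemma adj_sym : symmetric (adj E).
Proof.
move=> i j; rewrite /adj; apply/existsP/existsP => -[e /andP[eE /andP[h1 h2]]];
  by exists e; rewrite eE h1 h2.
Qed.

Lemma csym : connect_sym (adj E).
Proof. exact: sym_connect_sym adj_sym. Qed.

Definition ccomp (i : 'I_n) : {set 'I_n} := [set j | connect (adj E) i j].

Lemma adj_edge i j e : e \in E -> i \in e -> j \in e -> adj E i j.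
Proof. by move=> eE hi hj; apply/existsP; exists e; rewrite eE hi hj. Qed.

Lemma propagate (P : {pred 'I_n}) r j :
  (forall a b, adj E a b -> a \in P -> b \in P) -> r \in P ->
  connect (adj E) r j -> j \in P.
Proof.
move=> step Pr c; by rewrite -(closed_connect (intro_closed csym step) c).
Qed.

Definition restr (S : {set 'I_n}) (x : 'rV[C]_n) : 'rV[C]_n :=
  \row_i (if i \in S then x ord0 i else 0).

Definition ones : 'rV[C]_n := \row_i 1.
Definition ind S := restr S ones.

Lemma edge_other e i : e \in E -> exists j, j \in e :\ i.
Proof.
move=> eE; apply/set0Pn; rewrite -card_gt0.
have := cardsD1 i e; rewrite Hunif //; move: Hk3; case: (i \in e) => /=; lia.
Qed.

Lemma restr_lap r x i :
  laplacian_apply k E (restr (ccomp r) x) i =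
  if i \in ccomp r then laplacian_apply k E x i else 0.
Proof.
rewrite /laplacian_apply mxE.
case: ifP => iS.
  congr (_ - _); apply: eq_bigr => e; rewrite inE => /andP[eE ie].
  apply: eq_bigr => j; rewrite in_setD1 => /andP[_ je]; rewrite mxE.
  suff -> : j \in ccomp r by [].
  move: iS; rewrite !inE => ci; apply: connect_trans ci _.
  by apply: connect1; apply: adj_edge eE ie je.
rewrite expr0n /=.
have -> : k.-1 == 0%N = false by apply/negbTE; move: Hk3; case: k => [|[|]].
rewrite mulr0 big1 ?subr0 // => e; rewrite inE => /andP[eE ie].
have [j hj] := edge_other i eE.
rewrite (bigD1 j) //= mxE.
have -> : j \in ccomp r = false.
  apply/negbTE; apply: contraFN iS; rewrite !inE => cj.
  apply: connect_trans cj _; apply: connect1.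
  by move: hj; rewrite in_setD1 => /andP[_ je]; apply: adj_edge eE je ie.
by rewrite mul0r.
Qed.

Lemma ones_lap i : laplacian_apply k E ones i = 0.
Proof.
rewrite /laplacian_apply mxE expr1n mulr1.
rewrite (eq_bigr (fun _ => 1)); last first.
  by move=> e _; rewrite big1 // => j _; rewrite mxE.
by rewrite sumr_const subrr.
Qed.

Lemma ind_lap r i : laplacian_apply k E (ind (ccomp r)) i = 0.
Proof. by rewrite restr_lap ones_lap; case: ifP. Qed.

Lemma indE S i : ind S ord0 i = if i \in S then 1 else 0.
Proof. by rewrite !mxE; case: ifP. Qed.


Lemma prodD1 (F : 'I_n -> C) (e : {set 'I_n}) a :
  a \in e -> \prod_(j in e) F j = F a * \prod_(j in e :\ a) F j.
Proof.
by move=> ae; rewrite (bigD1 a) //; congr (_ * _); apply: eq_bigl => j;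
  rewrite in_setD1 andbC.
Qed.

Lemma card_edge e i : e \in E -> i \in e -> #|e :\ i| = k.-1.
Proof. by move=> eE ie; have := cardsD1 i e; rewrite Hunif // ie; move=> ->. Qed.

Definition eig0 (x : 'rV[C]_n) := forall j, laplacian_apply k E x j = 0.

Lemma pe_norm (x : 'rV[C]_n) (m : C) i : eig0 x -> (forall j, `|x ord0 j| <= m) -> `|x ord0 i| = m ->
  forall e, e \in E -> i \in e -> `|\prod_(j in e :\ i) x ord0 j| = m ^+ k.-1.
Proof.
move=> hx hb hi.
have m0 : 0 <= m by rewrite -hi.
pose F e := m ^+ k.-1 - `|\prod_(j in e :\ i) x ord0 j|.
have Fge0 : forall e, e \in edges_at E i -> 0 <= F e.
  move=> e; rewrite inE => /andP[eE ie]; rewrite /F subr_ge0 normr_prod.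
  rewrite -(card_edge eE ie) -prodr_const; apply: ler_prod => j _.
  by rewrite normr_ge0 hb.
have sum0 : \sum_(e in edges_at E i) F e = 0.
  apply/eqP; rewrite eq_le (sumr_ge0 _ Fge0) andbT.
  rewrite /F sumrB sumr_const subr_le0.
  apply: le_trans (ler_norm_sum _ _ _).
  have := hx i; rewrite /laplacian_apply => /eqP; rewrite subr_eq0 => /eqP <-.
  by rewrite normrM normr_nat normrX hi mulr_natl.
move=> e eE ie; apply/eqP; rewrite eq_sym -subr_eq0; apply/eqP.
by apply: (psumr_eq0P Fge0 sum0); rewrite inE eE ie.
Qed.

Lemma mod_step (x : 'rV[C]_n) (m : C) i : eig0 x -> (forall j, `|x ord0 j| <= m) -> `|x ord0 i| = m ->
  forall e, e \in E -> i \in e -> forall j, j \in e -> `|x ord0 j| = m.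
Proof.
move=> hx hb hi e eE ie j je.
have m0 : 0 <= m by rewrite -hi.
case: (eqVneq j i) => [-> //|ji].
have jei : j \in e :\ i by rewrite in_setD1 ji.
have [mz|mpos] := eqVneq m 0.
  by apply/eqP; rewrite eq_le hb mz normr_ge0.
have mgt : 0 < m by rewrite lt_def mpos m0.
have := pe_norm hx hb hi eE ie.
rewrite normr_prod (prodD1 _ jei).
have hc : #|e :\ i| = (#|e :\ i :\ j|).+1 by rewrite (cardsD1 j (e :\ i)) jei.
rewrite -(card_edge eE ie) hc exprS => heq.
apply/eqP; rewrite eq_le hb /=.
have hR : \prod_(l in e :\ i :\ j) `|x ord0 l| <= m ^+ #|e :\ i :\ j|.
  rewrite -prodr_const; apply: ler_prod => l _; by rewrite normr_ge0 hb.
rewrite -(ler_pM2r (exprn_gt0 #|e :\ i :\ j| mgt)) -heq.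
by apply: ler_wpM2l.
Qed.

Lemma sign_step x i : eig0 x -> (forall j, `|x ord0 j| <= 1) -> `|x ord0 i| = 1 ->
  (forall j, x ord0 j \is Num.real) -> odd k ->
  forall e, e \in E -> i \in e -> \prod_(j in e :\ i) x ord0 j = 1.
Proof.
move=> hx hb hi hr hodd.
have hreal e : \prod_(j in e :\ i) x ord0 j \is Num.real by apply: rpred_prod.
pose F e := 1 - \prod_(j in e :\ i) x ord0 j.
have Fge0 : forall e, e \in edges_at E i -> 0 <= F e.
  move=> e; rewrite inE => /andP[eE ie]; rewrite /F subr_ge0.
  apply: le_trans (real_ler_norm (hreal e)) _.
  by rewrite (pe_norm hx hb hi eE ie) expr1n.
have xi1 : x ord0 i ^+ k.-1 = 1.
  have hk : k.-1 = (2 * k./2)%N.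
    by move: (odd_double_half k); rewrite hodd -muln2; lia.
  by rewrite hk exprM -real_normK ?hi ?expr1n.

have sum0 : \sum_(e in edges_at E i) F e = 0.
  rewrite /F sumrB sumr_const.
  have := hx i; rewrite /laplacian_apply xi1 mulr1 => /eqP; rewrite subr_eq0 => /eqP <-.
  by rewrite subrr.
move=> e eE ie; apply/eqP; rewrite eq_sym -subr_eq0; apply/eqP.
by apply: (psumr_eq0P Fge0 sum0); rewrite inE eE ie.
Qed.

Lemma eq_adj x a b : eig0 x -> (forall j, `|x ord0 j| <= 1) -> `|x ord0 a| = 1 ->
  (forall j, x ord0 j \is Num.real) -> odd k -> adj E a b -> x ord0 b = x ord0 a.
Proof.
move=> hx hb ha hr hodd /existsP[e /andP[eE /andP[ae be]]].
have hb1 := mod_step hx hb ha eE ae be.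
have h1 := sign_step hx hb ha hr hodd eE ae.
have h2 := sign_step hx hb hb1 hr hodd eE be.
have := prodD1 (fun j => x ord0 j) ae; rewrite (prodD1 _ be) h1 h2 !mulr1.
by move=> ->.
Qed.


Lemma exists_max (T : finType) (f : T -> C) (t0 : T) :
  (forall t, f t \is Num.real) -> exists i, forall j, f j <= f i.
Proof.
move=> hr.
suff [i hi] : exists i, forall j, j \in enum T -> f j <= f i.
  by exists i => j; apply: hi; rewrite mem_enum.
elim: (enum T) => [|a s [i hi]]; first by exists t0.
case/orP: (real_leVge (hr a) (hr i)) => h.
  by exists i => j; rewrite inE => /orP[/eqP->//|]; apply: hi.
exists a => j; rewrite inE => /orP[/eqP->//|/hi hj]; exact: le_trans hj h.
Qed.

Lemma ccomp_refl i : i \in ccomp i.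
Proof. by rewrite inE connect0. Qed.

Lemma supp_ind r : Defs.support (ind (ccomp r)) = ccomp r.
Proof. by apply/setP => j; rewrite !inE indE inE; case: ifP; rewrite ?oner_eq0 ?eqxx. Qed.

Lemma eig0_of x : is_eigvec k E 0 x -> eig0 x.
Proof. by move=> [_ h] j; rewrite h mul0r. Qed.

Lemma row_nz (y : 'rV[C]_n) : y != 0 -> exists j, y ord0 j != 0.
Proof.
move=> yn; apply/existsP; apply: contraR yn => /existsPn h.
by apply/eqP/rowP => j; rewrite mxE; apply/eqP; move: (h j); rewrite negbK.
Qed.

Lemma main1 r : minimal_canonical_H0 k E (ind (ccomp r)).
Proof.
have ne : (ind (ccomp r) : 'rV[C]_n) != 0.
  apply/eqP => h; have := congr1 (fun M : 'rV[C]_n => M ord0 r) h.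
  by rewrite indE mxE ccomp_refl => /eqP; rewrite oner_eq0.
split; [split; [split=> //|] | split].
- by move=> i; rewrite ind_lap mul0r.
- move=> y [yn hy] hp.
  have hy0 := eig0_of (conj yn hy).
  have [i hi] := @exists_max _ (fun j => `|y ord0 j|) r (fun j => normr_real _).
  have {}hi : forall j, `|y ord0 j| <= `|y ord0 i| := hi.
  have [j yj] := row_nz yn.
  have yi : y ord0 i != 0.
    apply: contraNneq yj => yi0; rewrite -normr_eq0 eq_le normr_ge0 andbT.
    by move: (hi j); rewrite /= yi0 normr0.
  have hc : ccomp i \subset Defs.support y.
    apply/subsetP => l; rewrite inE => cl.
    have : l \in [pred l | `|y ord0 l| == `|y ord0 i|].
      apply: (propagate _ _ cl); last by rewrite inE.
      move=> a b ab; rewrite !inE => /eqP ha.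
      move: ab => /existsP[e /andP[eE /andP[ae be]]].
      by apply/eqP; apply: (mod_step hy0 hi ha eE ae be).
    by rewrite !inE => /eqP hl; rewrite -normr_eq0 hl normr_eq0.
  move: hp; rewrite supp_ind properE => /andP[hsub /negP]; apply.
  have ir : i \in ccomp r by apply: (subsetP hsub); apply: (subsetP hc); exact: ccomp_refl.
  apply: subset_trans hc; apply/subsetP => l; rewrite !inE => rl.
  move: ir; rewrite inE => ri.
  by apply: connect_trans rl; rewrite csym.
- by move=> j; rewrite indE; case: ifP => _; rewrite ?real1 ?real0.
- split; first by exists r; rewrite indE ccomp_refl normr1.
  by move=> j; rewrite indE; case: ifP => _; rewrite ?normr1 ?normr0 ?ler01.
Qed.

Hypothesis Hodd : odd k.

Lemma main2 x : minimal_canonical_H0 k E x ->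
  exists i0, x = ind (ccomp i0) \/ x = - ind (ccomp i0).
Proof.
move=> [[[xne hx] hmin] [hr [[i0 hi0] hb]]].
have hx0 := eig0_of (conj xne hx).
have hS : forall j, j \in ccomp i0 -> x ord0 j = x ord0 i0.
  move=> j; rewrite inE => cj.
  have : j \in [pred l | x ord0 l == x ord0 i0].
    apply: (propagate _ _ cj); last by rewrite inE.
    move=> a b ab; rewrite !inE => /eqP ha.
    have ha1 : `|x ord0 a| = 1 by rewrite ha.
    by rewrite (eq_adj hx0 hb ha1 hr Hodd ab) ha.
  by rewrite inE => /eqP.
have xi0 : x ord0 i0 != 0 by rewrite -normr_eq0 hi0 oner_eq0.
have hout : forall j, j \notin ccomp i0 -> x ord0 j = 0.
  move=> j jn; apply/eqP; apply/negPn/negP => xj.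
  pose y := restr (ccomp i0) x.
  have ye : is_eigvec k E 0 y.
    split.
      apply/eqP => h; have := congr1 (fun M : 'rV[C]_n => M ord0 i0) h.
      by rewrite !mxE ccomp_refl; apply/eqP.
    by move=> i; rewrite restr_lap hx0 mul0r; case: ifP.
  apply: (hmin y ye); rewrite properE; apply/andP; split.
    apply/subsetP => l; rewrite !inE mxE; by case: ifP; rewrite ?eqxx.
  apply/subsetPn; exists j; first by rewrite inE.
  by rewrite inE mxE (negbTE jn) eqxx.
exists i0.
have : (`|x ord0 i0| == 1) by rewrite hi0.
rewrite real_eqr_norml // ler01 andbT => /orP[]/eqP h; [left|right];
  apply/rowP => j; rewrite !mxE; case: ifP => jc.
all: first [by rewrite hS // h | by rewrite hout ?jc ?oppr0].
Qed.

End Aux.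

Theorem proposition5p3 (C : numClosedFieldType) (n k : nat)
    (E : {set {set 'I_n}})
    (Hk3 : (3 <= k)%N) (Hodd : odd k) (Hkn : (k <= n)%N)
    (HE : E != set0) (Hunif : forall e, e \in E -> #|e| = k) :
  exists s : seq 'rV[C]_n,
    [/\ (forall x, x \in s -> minimal_canonical_H0 k E x),
        (forall x, minimal_canonical_H0 k E x -> (x \in s) || (- x \in s)),
        uniq (s ++ map (fun x => - x) s)
      & size s = num_components E].
Proof.
pose P := [set ccomp E i | i : 'I_n].
exists [seq ind C S0 | S0 <- enum P]; split.
- move=> x /mapP[S0]; rewrite mem_enum => /imsetP[i _ ->] ->.
  exact: main1.
- move=> x /(main2 Hk3 Hunif Hodd)[i0 [->|->]]; apply/orP; [left|right];
    rewrite ?opprK; apply: map_f; rewrite mem_enum; by apply: imset_f.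
- have indinj : injective (ind C (n:=n)).
    move=> S0 T h; apply/setP => j.
    have := congr1 (fun M : 'rV[C]_n => M ord0 j) h; rewrite !indE.
    by do 2 case: ifP => //; move=> _ _ /eqP; rewrite ?oner_eq0 // eq_sym oner_eq0.
  rewrite cat_uniq (map_inj_uniq oppr_inj) (map_inj_uniq indinj) enum_uniq /= andbT.
  apply/hasPn => y /mapP[x /mapP[T _ ->] ->]; apply/negP => /mapP[S0].
  rewrite mem_enum => /imsetP[i _ ->] h.
  have := congr1 (fun M : 'rV[C]_n => M ord0 i) h; rewrite mxE !indE ccomp_refl.
  case: ifP => _; last by rewrite oppr0 => /eqP; rewrite eq_sym oner_eq0.
  by move/eqP; rewrite eq_sym -subr_eq0 opprK -mulr2n pnatr_eq0.
- by rewrite size_map -cardE.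
Qed.
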